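(* Let $\Psi$ be proper closed convex, $F=\frac1n\sum_{i=1}^nF_i$ with $F_i(x)=\mathbb{E}_{\xi_i\sim\mathcal{D}_i}[F_{\xi_i}(x)]$, and $x^*$ a solution of $\langle F(x^* ),x-x^*\rangle+\Psi(x)-\Psi(x^* )\ge0$ for all $x$. Let $K\ge0$, $\beta\in(0,1]$, $0<\gamma\le1/\ell$, $V\ge\|x^0-x^*\|^2+\frac{25600\gamma^2\ln^2\frac{48n(K+1)}{\beta}}{n^2}\sum_{i=1}^n\|F_i(x^* )\|^2$, $Q=B_{3\sqrt V}(x^* )$, and assume: $F$ is monotone on $Q$; for every solution $x^*$, $\|F_i(x)-F_i(x^* )\|^2\le\ell\langle F_i(x)-F_i(x^* ),x-x^*\rangle$ for $x\in Q$, $i\in[n]$; and $\|F(x)-F(y)\|^2\le\ell\langle F(x)-F(y),x-y\rangle$ for $x,y\in Q$. Consider DProx-clipped-SGDA-shift (arbitrary $h_i^0,\nu,\lambda_k$). If $x^k\in B_{3\sqrt V}(x^* )$ for all $k=0,1,\dots,K-1$, then for all $u\in B_{3\sqrt V}(x^* )$ $$\langle F(u),x^K_{\mathrm{avg}}-u\rangle+\Psi(x^K_{\mathrm{avg}})-\Psi(u)\le\frac{\|x^0-u\|^2-\|x^K-u\|^2}{2\gamma K}+\frac\gamma K\sum_{k=0}^{K-1}\|\omega_k\|^2+\frac1K\sum_{k=0}^{K-1}\langle x^k-u,\omega_k\rangle,$$ where $x^K_{\mathrm{avg}}=\frac1K\sum_{k=0}^{K-1}x^{k+1}$ and $\omega_k=F(x^k)-\tilde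 g^k$.
   Context: $\mathrm{prox}_{\gamma\Psi}(x)=\arg\min_y\{\gamma\Psi(y)+\frac12\|y-x\|^2\}$; $\mathrm{clip}(y,\lambda)=\min\{1,\lambda/\|y\|\}y$ ($\mathrm{clip}(0,\lambda)=0$). DProx-clipped-SGDA-shift: $x^{k+1}=\mathrm{prox}_{\gamma\Psi}(x^k-\gamma\tilde g^k)$, $\tilde g^k=\frac1n\sum_i\tilde g_i^k$, $\tilde g_i^k=h_i^k+\hat\Delta_i^k$, $h_i^{k+1}=h_i^k+\nu\hat\Delta_i^k$, $\hat\Delta_i^k=\mathrm{clip}(F_{\xi_i^k}(x^k)-h_i^k,\lambda_k)$, with $\xi_i^k$ sampled independently. *)

(* Defs.v *)
From HB Require Import structures.
From mathcomp Require Import all_boot all_order all_algebra.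
From mathcomp Require Import all_classical all_reals all_analysis.
Set Implicit Arguments. Unset Strict Implicit. Unset Printing Implicit Defensive.
Import Order.TTheory GRing.Theory Num.Theory.
Import numFieldNormedType.Exports.
Local Open Scope classical_set_scope.
Local Open Scope ring_scope.

Section Defs.
Variables (R : realType) (d : nat).
Notation vec := 'rV[R]_d.

Definition dotp (u v : vec) : R := \sum_(j < d) u 0 j * v 0 j.
Definition sqnorm (u : vec) : R := dotp u u.
Definition enorm (u : vec) : R := Num.sqrt (sqnorm u).

Definition ball_E (c : vec) (r : R) : set vec := [set x | enorm (x - c) <= r].

Definition clip (y : vec) (lam : R) : vec :=
  if y == 0 then 0 else (Num.min 1 (lam / enorm y)) *: y.

Definition proper_fun (Psi : vec -> \bar R) : Prop :=
  (forall x, Psi x != -oo%E) /\ (exists x, Psi x \is a fin_num).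
Definition convex_fun (Psi : vec -> \bar R) : Prop :=
  forall (x y : vec) (t : R), 0 < t < 1 ->
    (Psi (t *: x + (1 - t) *: y)%R <= t%:E * Psi x + (1 - t)%:E * Psi y)%E.
(* closed = lower semicontinuous = all sublevel sets closed *)
Definition closed_fun (Psi : vec -> \bar R) : Prop :=
  forall a : R, closed [set x : vec | (Psi x <= a%:E)%E].

Definition is_prox (gamma : R) (Psi : vec -> \bar R) (z p : vec) : Prop :=
  forall y : vec,
    (gamma%:E * Psi p + (sqnorm (p - z) / 2)%:E
       <= gamma%:E * Psi y + (sqnorm (y - z) / 2)%:E)%E.

End Defs.

Section Alg.
Variables (R : realType) (d n : nat) (d0 : measure_display) (T : measurableType d0).
Notation vec := 'rV[R]_d.

Definition avg_op (Fi : 'I_n -> vec -> vec) (x : vec) : vec :=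
  n%:R^-1 *: \sum_(i < n) Fi i x.

Definition is_VI_solution (F : vec -> vec) (Psi : vec -> \bar R) (xs : vec) : Prop :=
  forall x : vec, (0 <= (dotp (F xs) (x - xs))%:E + Psi x - Psi xs)%E.

(* DProx-clipped-SGDA-shift quantities, for a realization xi of the samples;
   Fxi i s x = F_{xi_i}(x) for sample s of worker i *)
Definition Delta_hat (Fxi : 'I_n -> T -> vec -> vec) (xi : nat -> 'I_n -> T)
  (x : nat -> vec) (h : nat -> 'I_n -> vec) (lam : nat -> R) (k : nat) (i : 'I_n) : vec :=
  clip (Fxi i (xi k i) (x k) - h k i) (lam k).
Definition g_tilde (Fxi : 'I_n -> T -> vec -> vec) (xi : nat -> 'I_n -> T)
  (x : nat -> vec) (h : nat -> 'I_n -> vec) (lam : nat -> R) (k : nat) : vec :=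
  n%:R^-1 *: \sum_(i < n) (h k i + Delta_hat Fxi xi x h lam k i).

Definition DProx_clipped_SGDA_shift (gamma nu : R) (Psi : vec -> \bar R)
  (Fxi : 'I_n -> T -> vec -> vec) (xi : nat -> 'I_n -> T)
  (x : nat -> vec) (h : nat -> 'I_n -> vec) (lam : nat -> R) : Prop :=
  (forall k i, h k.+1 i = h k i + nu *: Delta_hat Fxi xi x h lam k i) /\
  (forall k, is_prox gamma Psi (x k - gamma *: g_tilde Fxi xi x h lam k) (x k.+1)).

End Alg.

(* Main.v *)
Require Import Defs.
From HB Require Import structures.
From mathcomp Require Import all_boot all_order all_algebra.
From mathcomp Require Import all_classical all_reals all_analysis.
Import Order.TTheory GRing.Theory Num.Theory.
Import numFieldNormedType.Exports.
Local Open Scope classical_set_scope.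
Local Open Scope ring_scope.

From mathcomp Require Import ring lra.
Section Helpers.
Variables (R : realType) (d : nat).
Notation vec := 'rV[R]_d.
Implicit Types (u v w : vec).

Lemma dotpDl u v w : dotp (u + v) w = dotp u w + dotp v w.
Proof. by rewrite /dotp -big_split /=; apply: eq_bigr => j _; rewrite mxE mulrDl. Qed.
Lemma dotpZl a u v : dotp (a *: u) v = a * dotp u v.
Proof. by rewrite /dotp mulr_sumr; apply: eq_bigr => j _; rewrite mxE mulrA. Qed.
Lemma dotpC u v : dotp u v = dotp v u.
Proof. by apply: eq_bigr => j _; rewrite mulrC. Qed.
Lemma dotpNl u v : dotp (- u) v = - dotp u v.
Proof. by rewrite -scaleN1r dotpZl mulN1r. Qed.
Lemma dotpBl u v w : dotp (u - v) w = dotp u w - dotp v w.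
Proof. by rewrite dotpDl dotpNl. Qed.
Lemma dotpDr u v w : dotp w (u + v) = dotp w u + dotp w v.
Proof. by rewrite dotpC dotpDl !(dotpC w). Qed.
Lemma dotpZr a u v : dotp v (a *: u) = a * dotp v u.
Proof. by rewrite dotpC dotpZl dotpC. Qed.
Lemma dotpNr u v : dotp v (- u) = - dotp v u.
Proof. by rewrite dotpC dotpNl dotpC. Qed.
Lemma dotpBr u v w : dotp w (u - v) = dotp w u - dotp w v.
Proof. by rewrite dotpDr dotpNr. Qed.
Lemma dotp0l v : dotp 0 v = 0.
Proof. by rewrite /dotp big1 // => j _; rewrite mxE mul0r. Qed.
Lemma sqnorm_ge0 u : 0 <= sqnorm u.
Proof. by apply: sumr_ge0 => j _; rewrite -expr2 sqr_ge0. Qed.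
Lemma dotp_suml m (f : 'I_m -> vec) v :
  dotp (\sum_(i < m) f i) v = \sum_(i < m) dotp (f i) v.
Proof.
elim: m f => [|m IH] f; first by rewrite !big_ord0 dotp0l.
by rewrite !big_ord_recr /= dotpDl IH.
Qed.

Lemma lim_le (A B M : R) : 0 <= M ->
  (forall t, 0 < t < 1 -> A <= B + t * M) -> A <= B.
Proof.
move=> M0 H; rewrite leNgt; apply/negP => AB.
set e := A - B.
have e0 : 0 < e by rewrite /e subr_gt0.
set t := e / (e + 2 * M + 2).
have D0 : 0 < e + 2 * M + 2 by lra.
have t0 : 0 < t by rewrite /t divr_gt0.
have t1 : t < 1 by rewrite /t ltr_pdivrMr // mul1r; lra.
have tM : t * M < e.
  rewrite /t mulrAC ltr_pdivrMr //.
  have : 0 < e * (e + M + 2) by apply: mulr_gt0 => //; lra.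
  nra.
have := H t; rewrite t0 t1 => /(_ isT); move: tM; rewrite /e; lra.
Qed.


Lemma prox_fin (gamma : R) (Psi : vec -> \bar R) z p :
  0 < gamma -> proper_fun Psi -> is_prox gamma Psi z p -> exists a, Psi p = a%:E.
Proof.
move=> g0 [nn [y0 fy]] pr.
case E: (Psi p) => [a| |]; first by exists a.
- have := pr y0; rewrite E gt0_muley ?lte_fin //.
  by move: fy; case: (Psi y0).
- by have := nn p; rewrite E.
Qed.

Lemma prox_ineq (gamma : R) (Psi : vec -> \bar R) z p u a b :
  0 < gamma -> convex_fun Psi -> (forall y, Psi y != -oo%E) ->
  is_prox gamma Psi z p -> Psi p = a%:E -> Psi u = b%:E ->
  gamma * (a - b) <= dotp (p - z) (u - p).
Proof.
move=> g0 cvx nn pr Pa Pb.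
apply: (@lim_le _ _ (sqnorm (u - p) / 2)).
  by rewrite divr_ge0 // sqnorm_ge0.
move=> t /andP[t0 t1].
have := cvx u p t; rewrite t0 t1 => /(_ isT).
rewrite Pa Pb.
set y := t *: u + (1 - t) *: p.
have := pr y; rewrite Pa.
case Ey: (Psi y) => [c| |].
- rewrite -!EFinM -!EFinD !lee_fin => H Hc.
  have ey : y - z = (p - z) + t *: (u - p).
    by rewrite /y scalerBr scalerBl scale1r; rewrite addrCA addrAC.
  move: H; rewrite /sqnorm ey.
  move: (p - z) (u - p) => P Q.
  rewrite dotpDl !dotpDr !dotpZl !dotpZr (dotpC Q P).
  have : gamma * c <= gamma * (t * b + (1 - t) * a) by rewrite ler_wpM2l // ltW.
  set X := dotp P Q; set N := dotp P P; set M := dotp Q Q.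
  move=> Hgc H.
  have : t * (gamma * (a - b)) <= t * (X + t * (M / 2)) by nra.
  by rewrite ler_pM2l.
- by rewrite leye_eq.
- by have := nn y; rewrite Ey.
Qed.


Lemma step_alg (gamma ell psi bb : R) (Fa Fu g a b u : vec) :
  0 < gamma -> 0 < ell -> gamma <= ell^-1 ->
  gamma * (psi - bb) <= dotp (b - (a - gamma *: g)) (u - b) ->
  0 <= dotp (Fa - Fu) (a - u) ->
  sqnorm (Fa - Fu) <= ell * dotp (Fa - Fu) (a - u) ->
  gamma * (dotp Fu (b - u) + psi - bb) <=
    (sqnorm (a - u) - sqnorm (b - u)) / 2 + gamma ^+ 2 * sqnorm (Fa - g)
    + gamma * dotp (a - u) (Fa - g).
Proof.
move=> g0 l0 gl P Mo Co.
have gl1 : gamma * ell <= 1 by rewrite -(ler_pM2r l0) in gl; rewrite mulVf ?gt_eqF // in gl.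
have E1 : b - (a - gamma *: g) = (b - a) + gamma *: ((Fa - Fu) + Fu - (Fa - g)).
  by apply/rowP => j; rewrite !mxE; ring.
have E2 : u - b = - ((a - u) + (b - a)) by apply/rowP => j; rewrite !mxE; ring.
have E3 : b - u = (a - u) + (b - a) by apply/rowP => j; rewrite !mxE; ring.
rewrite E1 E2 in P; rewrite E3 /sqnorm.
have Y1 := sqnorm_ge0 (gamma *: (Fa - g) - 2^-1 *: (b - a)).
have Y2 := sqnorm_ge0 (gamma *: (Fa - Fu) + 2^-1 *: (b - a)).
move: P Mo Co Y1 Y2; rewrite /sqnorm.
move: (a - u) (b - a) (Fa - Fu) (Fa - g) => e1 e2 f1 w.
rewrite !(dotpDl, dotpDr, dotpZl, dotpZr, dotpNl, dotpNr, dotpBl, dotpBr).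
move=> P Mo Co Y1 Y2.
have h1 : gamma * gamma * dotp f1 f1 <= gamma * gamma * (ell * dotp f1 e1).
  by rewrite ler_wpM2l // mulr_ge0 // ltW.
have h2 : gamma * ell * dotp f1 e1 <= dotp f1 e1.
  by rewrite -[X in _ <= X]mul1r ler_wpM2r.
have := dotpC e1 e2; have := dotpC e1 w; have := dotpC e2 w; have := dotpC e1 f1;
have := dotpC e2 f1; have := dotpC e1 Fu; have := dotpC e2 Fu; have := dotpC w f1;
have := dotpC w Fu; have := dotpC f1 Fu.
rewrite expr2.
nra.
Qed.


Lemma jensen (Psi : vec -> \bar R) (y : nat -> vec) (psi : nat -> R) :
  convex_fun Psi -> (forall v, Psi v != -oo%E) ->
  (forall k, Psi (y k) = (psi k)%:E) ->
  forall m, (0 < m)%N -> exists c, Psi (m%:R^-1 *: \sum_(k < m) y k) = c%:E /\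
     c <= m%:R^-1 * \sum_(k < m) psi k.
Proof.
move=> cvx nn Py; elim=> [//|m IH] _.
case: m IH => [|m] IH.
  by exists (psi 0%N); rewrite !big_ord1 mulr1n invr1 scale1r mul1r Py.
have [c [Pc Hc]] := IH isT.
set t : R := m.+1%:R / m.+2%:R.
have m1 : (m.+1%:R : R) != 0 by rewrite pnatr_eq0.
have m2 : (m.+2%:R : R) != 0 by rewrite pnatr_eq0.
have t0 : 0 < t by rewrite /t divr_gt0 // ltr0n.
have t1 : t < 1 by rewrite /t ltr_pdivrMr ?ltr0n // mul1r ltr_nat.
have tA : t * m.+1%:R^-1 = m.+2%:R^-1 by rewrite /t mulrAC divff // mul1r.
have e2 : (m.+2%:R : R) = m.+1%:R + 1 by rewrite [in LHS]mulrSr.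
have tB : 1 - t = m.+2%:R^-1.
  rewrite /t e2; field; apply: lt0r_neq0; have := ler0n R m; lra.
have EV : m.+2%:R^-1 *: \sum_(k < m.+2) y k =
    t *: (m.+1%:R^-1 *: \sum_(k < m.+1) y k) + (1 - t) *: y m.+1.
  by rewrite big_ord_recr /= scalerA tA tB scalerDr.
have := cvx (m.+1%:R^-1 *: \sum_(k < m.+1) y k) (y m.+1) t; rewrite t0 t1 => /(_ isT).
rewrite -EV Pc Py -!EFinM -EFinD.
case E: (Psi _) => [c'| |] //.
- rewrite lee_fin => Hc'; exists c'; split => //.
  apply: (le_trans Hc').
  rewrite big_ord_recr /= mulrDr.
  have -> : m.+2%:R^-1 * \sum_(i < m.+1) psi i = t * (m.+1%:R^-1 * \sum_(i < m.+1) psi i).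
    by rewrite mulrA tA.
  by rewrite -tB lerD2r ler_wpM2l // ltW.
- by have := nn (m.+2%:R^-1 *: \sum_(k < m.+2) y k); rewrite E.
Qed.


Lemma tele_sum (f : nat -> R) K : \sum_(k < K) (f k - f k.+1) = f 0%N - f K.
Proof.
elim: K => [|K IH]; first by rewrite big_ord0 subrr.
by rewrite big_ord_recr /= IH addrA subrK.
Qed.

End Helpers.

Theorem lemmaG1 (R : realType) (d n : nat) (d0 : measure_display)
  (T : measurableType d0) (D : 'I_n -> probability T R)
  (Fxi : 'I_n -> T -> 'rV[R]_d -> 'rV[R]_d) (Fi : 'I_n -> 'rV[R]_d -> 'rV[R]_d)
  (Psi : 'rV[R]_d -> \bar R) (xs : 'rV[R]_d)
  (K : nat) (beta gamma ell V nu : R)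
  (x : nat -> 'rV[R]_d) (h : nat -> 'I_n -> 'rV[R]_d) (lam : nat -> R)
  (xi : nat -> 'I_n -> T) :
  (0 < n)%N ->
  proper_fun Psi -> closed_fun Psi -> convex_fun Psi ->
  (* F_i(x) = E_{xi_i ~ D_i}[F_{xi_i}(x)], componentwise *)
  (forall i y (j : 'I_d), (D i).-integrable setT (fun s => (Fxi i s y 0 j)%:E)) ->
  (forall i y (j : 'I_d), (Fi i y 0 j)%:E = (\int[D i]_s (Fxi i s y 0 j)%:E)%E) ->
  is_VI_solution (avg_op Fi) Psi xs ->
  (0 < K)%N ->
  0 < beta <= 1 ->
  0 < ell -> 0 < gamma <= ell^-1 ->
  sqnorm (x 0%N - xs)
    + (25600%:R : R) * gamma ^+ 2 * (ln ((48%:R : R) * n%:R * K.+1%:R / beta)) ^+ 2 / n%:R ^+ 2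
      * \sum_(i < n) sqnorm (Fi i xs) <= V ->
  (* F monotone on Q = B_{3 sqrt V}(x* ) *)
  (forall y z, ball_E xs (3 * Num.sqrt V) y -> ball_E xs (3 * Num.sqrt V) z ->
     0 <= dotp (avg_op Fi y - avg_op Fi z) (y - z)) ->
  (* star-cocoercivity of each F_i on Q, around every solution *)
  (forall xs', is_VI_solution (avg_op Fi) Psi xs' ->
     forall y, ball_E xs (3 * Num.sqrt V) y -> forall i,
       sqnorm (Fi i y - Fi i xs') <= ell * dotp (Fi i y - Fi i xs') (y - xs')) ->
  (* cocoercivity of F on Q *)
  (forall y z, ball_E xs (3 * Num.sqrt V) y -> ball_E xs (3 * Num.sqrt V) z ->
     sqnorm (avg_op Fi y - avg_op Fi z)
       <= ell * dotp (avg_op Fi y - avg_op Fi z) (y - z)) ->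
  DProx_clipped_SGDA_shift gamma nu Psi Fxi xi x h lam ->
  (forall k, (k < K)%N -> ball_E xs (3 * Num.sqrt V) (x k)) ->
  forall u, ball_E xs (3 * Num.sqrt V) u ->
  let xavg := K%:R^-1 *: \sum_(k < K) x k.+1 in
  let omega := fun k => avg_op Fi (x k) - g_tilde Fxi xi x h lam k in
  ((dotp (avg_op Fi u) (xavg - u))%:E + Psi xavg - Psi u
    <= ((sqnorm (x 0%N - u) - sqnorm (x K - u)) / (2 * gamma * K%:R)
        + gamma / K%:R * \sum_(k < K) sqnorm (omega k)
        + K%:R^-1 * \sum_(k < K) dotp (x k - u) (omega k))%:E)%E.

Proof.
move=> n0 prop clo cvx integ Fdef sol K0 hb l0 /andP[g0 gl] HV mono coco cocoF
  [Hh Hprox] Hball u Hu; cbv zeta.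
have nn : forall v, Psi v != -oo%E by case: prop.
have fin k : exists a, Psi (x k.+1) = a%:E := @prox_fin R d gamma Psi _ _ g0 prop (Hprox k).
pose psi k := fine (Psi (x k.+1)).
have Ppsi k : Psi (x k.+1) = (psi k)%:E by rewrite /psi; case: (fin k) => a ->.
have [c [Pc Hc]] := @jensen R d Psi (fun k => x k.+1) psi cvx nn Ppsi K K0.
rewrite Pc.
case Eu: (Psi u) => [bb| |]; last by have := nn u; rewrite Eu.
2: by rewrite -EFinD /= leNye.
rewrite -EFinD lee_fin.
have step k : (k < K)%N -> gamma * (dotp (avg_op Fi u) (x k.+1 - u) + psi k - bb) <=
    (sqnorm (x k - u) - sqnorm (x k.+1 - u)) / 2
    + gamma ^+ 2 * sqnorm (avg_op Fi (x k) - g_tilde Fxi xi x h lam k)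
    + gamma * dotp (x k - u) (avg_op Fi (x k) - g_tilde Fxi xi x h lam k).
  move=> kK.
  apply: (@step_alg R d gamma ell) => //.
  - exact: (@prox_ineq R d gamma Psi) g0 cvx nn (Hprox k) (Ppsi k) Eu.
  - exact: mono (Hball k kK) Hu.
  - exact: cocoF (Hball k kK) Hu.
have S := ler_sum _ (fun (k : 'I_K) (_ : true) => step k (ltn_ord k)).
have kn : (K%:R : R) != 0 by rewrite pnatr_eq0 -lt0n.
have kp : (0 : R) < K%:R by rewrite ltr0n.
have HA : dotp (avg_op Fi u) (K%:R^-1 *: \sum_(k < K) x k.+1 - u) =
    K%:R^-1 * \sum_(k < K) dotp (avg_op Fi u) (x k.+1 - u).
  rewrite dotpBr dotpZr dotpC dotp_suml.
  under [in RHS]eq_bigr do rewrite dotpBr.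
  rewrite sumrB sumr_const card_ord.
  under eq_bigr do rewrite dotpC.
  by rewrite mulrBr -mulr_natr; field.
rewrite HA. move: (S (index_enum _)) => {}S.
rewrite -mulr_sumr !big_split /= -!mulr_sumr -mulr_suml sumr_const card_ord in S.
rewrite (@tele_sum R (fun k => sqnorm (x k - u))) in S.
move: S Hc.
move: (\sum_(k < K) dotp (avg_op Fi u) (x k.+1 - u)) (\sum_(k < K) psi k)
  (\sum_(k < K) sqnorm (avg_op Fi (x k) - g_tilde Fxi xi x h lam k))
  (\sum_(k < K) dotp (x k - u) (avg_op Fi (x k) - g_tilde Fxi xi x h lam k))
  (sqnorm (x 0%N - u)) (sqnorm (x K - u)) => SA SP SS SD D0 DK S Hc.
rewrite -[(- bb) *+ K]mulr_natr in S.
move: kn kp Hc S; move: (K%:R : R) => k kn kp Hc S.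
rewrite -(ler_pM2l (mulr_gt0 g0 kp)).
have -> : gamma * k * (k^-1 * SA + c - bb) = gamma * SA + gamma * (k * c) - gamma * k * bb.
  by field.
have -> : gamma * k * ((D0 - DK) / (2 * gamma * k) + gamma / k * SS + k^-1 * SD) =
    (D0 - DK) / 2 + gamma ^+ 2 * SS + gamma * SD.
  by field; rewrite kn gt_eqF.
have Hk : k * c <= SP.
  by rewrite -(ler_pM2l kp) in Hc; rewrite mulrA divff // mul1r in Hc.
have := ler_wpM2l (ltW g0) Hk.
move: S; rewrite ?mul1r ?mulr1; lra.
Qed.
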